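(* Let $G$ be a valise $(N,k)$ Adinkra with associated doubly even code $C$. Then the automorphism group of $G$ has order $2^{N-2k-a}$, and its orbits on the vertex set are $2^{k+a}$ in number and all of equal size, where $a=0$ if $C$ contains the all-ones word $(1,\dots,1)$ and $a=1$ otherwise.
   Context: An Adinkra of dimension $N$ is a finite connected simple graph $G=(V,E)$ with: a bipartition of $V$ into bosons and fermions (every edge joins a boson and a fermion); a height function (disregarded for valise Adinkras); a coloring of $E$ by colors $\{1,\dots,N\}$ such that each vertex is incident to exactly one edge of each color; an edge parity $\pi:E\to\mathbb{Z}_2$ (parity $1$ = dashed); such that every path with edge colors $(i,j)$, $i\ne j$, lies in a unique 4-cycle with colors $(i,j,i,j)$, each having an odd number of dashed edges. If $|V|=2^{N-k}$, $G$ is an $(N,k)$ Adinkra. Switching a vertex reverses the parity of its incident edges. An automorphism of $G$ is a permutation of $V$ preserving adjacency, edge colors and the boson/fermion bipartition which becomes parity-preserving after switching some set of vertices; automorphisms inducing the same permutation are identified. A doubly even $(N,k)$ code is a $k$-dimensional subspace of $\mathbb{Z}_2^N$ all of whose elements have Hamming weight $\equiv0\pmod4$. Labeling the vertices of an $N$-cube Adinkra by $\mathbb{Z}_2^N$ so that color-$i$ edges join $v$ and $v+e_i$, every $(N,k)$ Adinkra is equivalent to one obtained by identifying vertices whose labels differ by elements of some doubly even $(N,k)$ code $C$; this $C$ is the associated code. *)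

(* Defs.v *)
From HB Require Import structures.
From mathcomp Require Import all_boot all_order all_algebra all_fingroup.
Set Implicit Arguments. Unset Strict Implicit. Unset Printing Implicit Defensive.
Import GRing.Theory.
Local Open Scope ring_scope.

(* A (valise) Adinkra of dimension N on the finite vertex type V.
   adj  : adjacency of a simple graph (symmetric, irreflexive relation),
   col  : color of the edge {u,v} (only meaningful when adj u v),
   par  : parity of the edge {u,v} (true = dashed),
   bos  : the bosons (the others are fermions).
   Heights are disregarded (valise). *)
Definition adinkra (N : nat) (V : finType) (adj : rel V) (col : V -> V -> 'I_N)
    (par : V -> V -> bool) (bos : pred V) : Prop :=
  [/\ irreflexive adj /\ symmetric adj,
      (forall u v, adj u v -> (col u v = col v u) /\ (par u v = par v u)),
      (forall u v, connect adj u v),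
      (forall u v, adj u v -> bos u != bos v) /\
      (forall (v : V) (i : 'I_N), exists! w, (adj v w /\ col v w = i)) &
      (forall v w x, adj v w -> adj w x -> col v w != col w x ->
         (exists! y, [/\ adj x y, adj y v, col x y = col v w & col y v = col w x])
         /\ (forall y, adj x y -> adj y v -> col x y = col v w -> col y v = col w x ->
               odd (par v w + par w x + par x y + par y v)%N))].

(* Automorphisms are identified with permutations. *)
Definition is_adinkra_aut (N : nat) (V : finType) (adj : rel V) (col : V -> V -> 'I_N)
    (par : V -> V -> bool) (bos : pred V) (s : {perm V}) : bool :=
  [&& [forall u, forall v, adj (s u) (s v) == adj u v],
      [forall u, bos (s u) == bos u],
      [forall u, forall v, adj u v ==> (col (s u) (s v) == col u v)] &
      [exists S : {set V}, forall u, forall v,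
         adj u v ==> (par (s u) (s v) == par u v (+) (u \in S) (+) (v \in S))]].

Definition adinkra_aut (N : nat) (V : finType) (adj : rel V) (col : V -> V -> 'I_N)
    (par : V -> V -> bool) (bos : pred V) : {set {perm V}} :=
  [set s | is_adinkra_aut adj col par bos s].

Definition hweight (N : nat) (w : 'rV['F_2]_N) : nat := #|[set i : 'I_N | w 0 i != 0]|.

Definition doubly_even_code (N k : nat) (C : 'M['F_2]_N) : Prop :=
  \rank C = k /\ (forall w : 'rV['F_2]_N, (w <= C)%MS -> (4 %| hweight w)%N).

Definition unitv (N : nat) (i : 'I_N) : 'rV['F_2]_N := delta_mx 0 i.

(* C (row space) is the associated code of the Adinkra: the Adinkra is
   equivalent to the quotient of the N-cube by C, i.e. there is a surjective
   labeling of its vertices by Z_2^N whose fibres are exactly the cosets of C,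
   such that color-i edges join (the images of) v and v + e_i. *)
Definition associated_code (N : nat) (V : finType) (adj : rel V) (col : V -> V -> 'I_N)
    (C : 'M['F_2]_N) : Prop :=
  exists lab : 'rV['F_2]_N -> V,
    [/\ (forall v, exists x, lab x = v),
        (forall x y, lab x = lab y <-> (x - y <= C)%MS) &
        (forall x (i : 'I_N), (adj (lab x) (lab (x + unitv i)))
                              /\ (col (lab x) (lab (x + unitv i)) = i))].

Definition ones (N : nat) : 'rV['F_2]_N := const_mx 1.

(* Main.v *)
Require Import Defs.
From HB Require Import structures.
From mathcomp Require Import all_boot all_order all_algebra all_fingroup.
From mathcomp Require Import zify.
Set Implicit Arguments. Unset Strict Implicit. Unset Printing Implicit Defensive.
Import GRing.Theory.
Local Open Scope ring_scope.

Lemma F2_cases (a : 'F_2) : a = 0 \/ a = 1.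
Proof. by case: a => [[|[|m]] H] //=; [left|right]; apply/val_inj. Qed.
Lemma F2_nat n : (n%:R : 'F_2) = (odd n)%:R.
Proof. by rewrite -(Fp_nat_mod (p:=2)) // modn2. Qed.
Lemma F2_11 : (1 + 1 : 'F_2) = 0. Proof. by rewrite -[1 + 1]/(2%:R) F2_nat. Qed.
Lemma F2_xx (a : 'F_2) : a + a = 0.
Proof. by case: (F2_cases a) => ->; rewrite ?addr0 ?F2_11. Qed.

Ltac f2bf := intros;
  repeat match goal with a : _ |- _ => destruct (F2_cases a); subst a end;
  repeat match goal with H : @eq _ _ _ |- _ => move/(congr1 val): H => /= H end;
  solve [ apply/val_inj; done | match goal with H : _ = _ |- _ => discriminate H end ].

Lemma f2test (a b c d P : 'F_2) : c + d + b + a = 0 -> P + a + b = P + c + d.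
Proof. f2bf. Qed.

Lemma unitvE N (i l : 'I_N) : unitv i 0 l = (l == i)%:R.
Proof. by rewrite /unitv mxE eqxx. Qed.

Definition trunc N (m : nat) (x : 'rV['F_2]_N) : 'rV['F_2]_N :=
  \row_l (if (l < m)%N then x 0 l else 0).

Lemma trunc0 N (x : 'rV['F_2]_N) : trunc 0 x = 0.
Proof. by apply/rowP => l; rewrite !mxE. Qed.

Lemma truncN N (x : 'rV['F_2]_N) : trunc N x = x.
Proof. by apply/rowP => l; rewrite !mxE ltn_ord; congr (x _ _); apply/val_inj; rewrite /= ?ord1. Qed.

Lemma truncS N (x : 'rV['F_2]_N) m (H : (m < N)%N) :
  trunc m.+1 x = trunc m x + x 0 (Ordinal H) *: unitv (Ordinal H).
Proof.
apply/rowP => l; rewrite !mxE eqxx /= ltnS leq_eqVlt.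
have -> : (l == Ordinal H :> 'I_N) = (nat_of_ord l == m) by [].
case: (ltngtP l m) => Hl /=.
- by rewrite mulr0 addr0.
- by rewrite mulr0 addr0.
- by rewrite mulr1 add0r; congr (x _ _); apply/val_inj.
Qed.

Lemma truncD N m (x y : 'rV['F_2]_N) : trunc m (x + y) = trunc m x + trunc m y.
Proof. by apply/rowP => l; rewrite !mxE; case: ifP; rewrite ?addr0. Qed.

Lemma trunc_unitv N m (j : 'I_N) :
  trunc m (unitv j) = if (j < m)%N then unitv j else 0.
Proof.
apply/rowP => l; rewrite !mxE eqxx /=.
case: (eqVneq l j) => [->|Hl] /=; first by case: ifP; rewrite ?mxE ?eqxx.
by case: ifP; case: ifP => //; rewrite ?mxE ?(negbTE Hl) ?andbF.
Qed.

Lemma cube_ind N (P : 'rV['F_2]_N -> Prop) :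
  P 0 -> (forall x i, P x -> P (x + unitv i)) -> forall x, P x.
Proof.
move=> P0 PS x; rewrite -(truncN x).
suff: forall m, (m <= N)%N -> P (trunc m x) by apply.
elim=> [|m IH] Hm; first by rewrite trunc0.
rewrite (truncS x Hm).
case: (F2_cases (x 0 (Ordinal Hm))) => ->; rewrite ?scale0r ?addr0 ?scale1r.
- exact: IH (ltnW Hm).
- exact: PS (IH (ltnW Hm)).
Qed.

Lemma cube_const N (F : 'rV['F_2]_N -> 'F_2) :
  (forall x i, F (x + unitv i) = F x) -> forall x, F x = F 0.
Proof. by move=> HF; apply: cube_ind => // x i <-; apply: HF. Qed.

Definition Phi N (s : 'rV['F_2]_N -> 'I_N -> 'F_2) (m : nat) (x : 'rV['F_2]_N) : 'F_2 :=
  \sum_(i < N | (i < m)%N) x 0 i * s (trunc i x) i.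

Lemma PhiS N s m (x : 'rV['F_2]_N) (H : (m < N)%N) :
  Phi s m.+1 x = Phi s m x + x 0 (Ordinal H) * s (trunc m x) (Ordinal H).
Proof.
rewrite /Phi (bigD1 (Ordinal H)) /= ?ltnSn // addrC; congr (_ + _).
apply: eq_bigl => i; rewrite ltnS leq_eqVlt.
have -> : (i != Ordinal H) = (nat_of_ord i != m) by [].
by case: (ltngtP i m).
Qed.

Lemma Phi_step N (s : 'rV['F_2]_N -> 'I_N -> 'F_2) :
  (forall x i, s (x + unitv i) i = s x i) ->
  (forall x i j, i != j -> s x i + s (x + unitv i) j + s (x + unitv j) i + s x j = 0) ->
  forall x j m, (m <= N)%N ->
  Phi s m (x + unitv j) = Phi s m x + (if (j < m)%N then s (trunc m x) j else 0).
Proof.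
move=> hB hC x j; elim=> [|m IH] Hm.
  by rewrite /Phi !big_pred0 // addr0.
rewrite !(PhiS _ _ Hm) (IH (ltnW Hm)).
rewrite [(x + unitv j) 0 _]mxE unitvE truncD trunc_unitv (truncS x Hm).
set m' := Ordinal Hm.
have Em : (m' == j) = (m == j :> nat) by [].
rewrite Em [(j < m.+1)%N]ltnS eq_sym.
set z := trunc m x.
case: (ltngtP j m) => Hjm /=.
- have Hne : m' != j by rewrite Em eq_sym neq_ltn Hjm.
  rewrite addr0; case: (F2_cases (x 0 m')) => ->.
    by rewrite scale0r !mul0r !addr0.
  rewrite scale1r !mul1r; move: (hC z m' j Hne).
  move: (s z j) (s (z + unitv j) m') (s z m') (s (z + unitv m') j) (Phi s m x); f2bf.
- by rewrite !addr0.
- have -> : j = m' by apply/val_inj.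
  rewrite !addr0; case: (F2_cases (x 0 m')) => ->.
    by rewrite scale0r mul0r !addr0 !add0r mul1r.
  rewrite scale1r mul1r hB F2_11 mul0r addr0.
  by rewrite -addrA F2_xx addr0.
Qed.

Lemma cube_exact N (s : 'rV['F_2]_N -> 'I_N -> 'F_2) :
  (forall x i, s (x + unitv i) i = s x i) ->
  (forall x i j, i != j -> s x i + s (x + unitv i) j + s (x + unitv j) i + s x j = 0) ->
  exists F : 'rV['F_2]_N -> 'F_2, forall x i, F (x + unitv i) = F x + s x i.
Proof.
move=> hB hC; exists (Phi s N) => x i.
by rewrite (Phi_step hB hC) // ltn_ord truncN.
Qed.

Definition pi0 N (y : 'rV['F_2]_N) (i : 'I_N) : 'F_2 := \sum_(l < N | (l < i)%N) y 0 l.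
Definition Bf N (x y : 'rV['F_2]_N) : 'F_2 := \sum_i x 0 i * pi0 y i.
Definition sumx N (x : 'rV['F_2]_N) : 'F_2 := \sum_i x 0 i.
Definition dotv N (x y : 'rV['F_2]_N) : 'F_2 := \sum_i x 0 i * y 0 i.

Lemma pi0D N (x y : 'rV['F_2]_N) i : pi0 (x + y) i = pi0 x i + pi0 y i.
Proof. by rewrite /pi0 -big_split; apply: eq_bigr => l _; rewrite mxE. Qed.

Lemma pi0_unitv N (j i : 'I_N) : pi0 (unitv j) i = (j < i)%N%:R.
Proof.
rewrite /pi0 (eq_bigr (fun l => (l == j)%:R)); last by move=> l _; rewrite unitvE.
case: ltnP => Hj.
  rewrite (bigD1 j) //= eqxx big1 ?addr0 // => l /andP[_ /negbTE ->] //.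
by rewrite big1 // => l Hl; case: eqP Hl => // ->; rewrite ltnNge Hj.
Qed.

Lemma pi0_B N (x : 'rV['F_2]_N) i : pi0 (x + unitv i) i = pi0 x i.
Proof. by rewrite pi0D pi0_unitv ltnn addr0. Qed.

Lemma pi0_C N (x : 'rV['F_2]_N) i j : i != j ->
  pi0 x i + pi0 (x + unitv i) j + pi0 (x + unitv j) i + pi0 x j = 1.
Proof.
move=> Hij; rewrite !pi0D !pi0_unitv.
have : (i < j)%N || (j < i)%N by rewrite -neq_ltn.
case/orP=> H; [rewrite H ltnNge (ltnW H) | rewrite H ltnNge (ltnW H)] => /=;
  move: (pi0 x i) (pi0 x j); f2bf.
Qed.

Lemma BfDl N (x x' y : 'rV['F_2]_N) : Bf (x + x') y = Bf x y + Bf x' y.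
Proof. by rewrite /Bf -big_split; apply: eq_bigr => l _; rewrite mxE mulrDl. Qed.

Lemma Bf_unitv N (j : 'I_N) y : Bf (unitv j) y = pi0 y j.
Proof.
rewrite /Bf (bigD1 j) //= unitvE eqxx mul1r big1 ?addr0 // => l /negbTE Hl.
by rewrite unitvE Hl mul0r.
Qed.

Lemma Bf_sym N (w c : 'rV['F_2]_N) : Bf w c + Bf c w = sumx w * sumx c + dotv w c.
Proof.
have E : sumx w * sumx c = Bf w c + dotv w c + Bf c w.
  rewrite /sumx big_distrl /=.
  have -> : \sum_i w 0 i * sumx c =
      \sum_(i < N) (\sum_(l < N | (l < i)%N) w 0 i * c 0 l + w 0 i * c 0 i
             + \sum_(l < N | (i < l)%N) w 0 i * c 0 l).
    apply: eq_bigr => i _; rewrite /sumx big_distrr /= (bigID (fun l : 'I_N => (l < i)%N)) /=.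
    rewrite -addrA; congr (_ + _).
    rewrite (bigD1 i) ?ltnn //=; congr (_ + _).
    by apply: eq_bigl => l; rewrite -leqNgt ltn_neqAle andbC eq_sym.
  rewrite !big_split /=; congr (_ + _ + _).
  - by apply: eq_bigr => i _; rewrite /pi0 big_distrr.
  - rewrite /Bf /pi0.
    under eq_bigr do rewrite big_mkcond /=.
    rewrite exchange_big /=; apply: eq_bigr => l _.
    rewrite big_distrr /= big_mkcond /=; rewrite [RHS]big_mkcond; apply: eq_bigr => i _.
    by case: ifP; rewrite ?mulr0 // mulrC.
rewrite E; move: (Bf w c) (Bf c w) (dotv w c); f2bf.
Qed.

Lemma dotv_mx N (x y : 'rV['F_2]_N) : dotv x y = (x *m y^T) 0 0.
Proof. by rewrite mxE; apply: eq_bigr => i _; rewrite mxE. Qed.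

Lemma dotvC N (x y : 'rV['F_2]_N) : dotv x y = dotv y x.
Proof. by apply: eq_bigr => i _; rewrite mulrC. Qed.

Lemma sumx_mx N (x : 'rV['F_2]_N) : sumx x = (x *m (ones N)^T) 0 0.
Proof. by rewrite mxE; apply: eq_bigr => i _; rewrite !mxE mulr1. Qed.

Lemma orthP N m (C : 'M['F_2]_(m, N)) c :
  (c *m C^T = 0) <-> (forall w, (w <= C)%MS -> dotv w c = 0).
Proof.
split=> [H w /submxP[u ->] | H].
  by rewrite dotvC dotv_mx trmx_mul mulmxA H mul0mx mxE.
apply/rowP => r; rewrite [RHS]mxE -[RHS](H (row r C)) ?row_sub // dotvC mxE.
by apply: eq_bigr => i _; rewrite !mxE.
Qed.

Lemma hweight_sum N (w : 'rV['F_2]_N) : hweight w = (\sum_i (w 0%R i != 0%R))%N.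
Proof.
rewrite /hweight -sum1_card big_mkcond /=; apply: eq_bigr => i _.
by rewrite inE; case: (_ != _).
Qed.

Lemma F2_nat_neq0 (a : 'F_2) : ((a != 0)%:R : 'F_2) = a.
Proof. by case: (F2_cases a) => ->; rewrite ?eqxx // oner_neq0. Qed.

Lemma sumx_hweight N (w : 'rV['F_2]_N) : sumx w = (hweight w)%:R.
Proof. by rewrite hweight_sum natr_sum; apply: eq_bigr => i _; rewrite F2_nat_neq0. Qed.

Lemma hweightD N (w w' : 'rV['F_2]_N) :
  (hweight (w + w') + 2 * \sum_i ((w 0%R i * w' 0%R i)%R != 0%R) = hweight w + hweight w')%N.
Proof.
rewrite !hweight_sum big_distrr -!big_split /=; apply: eq_bigr => i _.
rewrite mxE; case: (F2_cases (w 0 i)) => ->; case: (F2_cases (w' 0 i)) => ->;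
  by rewrite ?F2_11 ?mulr0 ?mul0r ?mulr1 ?addr0 ?add0r ?eqxx ?oner_neq0.
Qed.

Lemma dotv_cnt N (w w' : 'rV['F_2]_N) : dotv w w' = (\sum_i ((w 0%R i * w' 0%R i)%R != 0%R))%N%:R.
Proof. by rewrite natr_sum; apply: eq_bigr => i _; rewrite F2_nat_neq0. Qed.

Lemma de_orth N k (C : 'M['F_2]_N) : doubly_even_code k C ->
  forall w w', (w <= C)%MS -> (w' <= C)%MS -> dotv w w' = 0.
Proof.
case=> _ HC w w' Hw Hw'.
have := HC _ (addmx_sub Hw Hw'); have := HC _ Hw; have := HC _ Hw'.
move: (hweightD w w'); rewrite dotv_cnt; set s := (\sum_i _)%N.
move=> E /dvdnP[a Ea] /dvdnP[b Eb] /dvdnP[c Ec].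
rewrite Ea Eb Ec in E.
have -> : s = (2 * (a + b - c))%N by clearbody s; lia.
by rewrite F2_nat oddM.
Qed.

Lemma de_even N k (C : 'M['F_2]_N) : doubly_even_code k C ->
  forall w, (w <= C)%MS -> sumx w = 0.
Proof.
case=> _ HC w Hw; rewrite sumx_hweight F2_nat.
by case/dvdnP: (HC _ Hw) => a ->; rewrite oddM andbF.
Qed.

Lemma rank_cK N (C : 'M['F_2]_N) :
  \rank (col_mx C (ones N)) = (\rank C + (if (ones N <= C)%MS then 0 else 1))%N.
Proof.
rewrite -addsmxE; case: ifP => H; first by rewrite (addsmx_idPl H) addn0.
have := mxrank_sum_cap C (ones N).
have Ho : ones N != 0 by apply: contraFN H => /eqP ->; rewrite sub0mx.
rewrite rank_rV Ho.
have := mxrank_leqif_sup (capmxSr C (ones N)); rewrite rank_rV Ho => -[Hle Heq].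
have Hne : \rank (C :&: ones N)%MS != 1%N.
  apply/negP => /eqP E; move: Heq; rewrite E eqxx => /esym.
  by rewrite sub_capmx submx_refl andbT H.
lia.
Qed.

Definition Kmx N (C : 'M['F_2]_N) := kermx (col_mx C (ones N))^T.

Lemma mx11_eq0 (M : 'M['F_2]_1) : (M == 0) = (M 0 0 == 0).
Proof.
apply/eqP/eqP => [->|H]; first by rewrite mxE.
by apply/matrixP => i j; rewrite !ord1 H mxE.
Qed.

Lemma memK N (C : 'M['F_2]_N) c :
  (c <= Kmx C)%MS = (c *m C^T == 0) && (sumx c == 0).
Proof.
by rewrite /Kmx sub_kermx tr_col_mx mul_mx_row row_mx_eq0 mx11_eq0 sumx_mx.
Qed.

Lemma C_sub_K N k (C : 'M['F_2]_N) : doubly_even_code k C -> (C <= Kmx C)%MS.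
Proof.
move=> HC; apply/rV_subP => w Hw; rewrite memK (de_even HC Hw) eqxx andbT.
by apply/eqP/orthP => w' Hw'; apply: de_orth HC _ _ Hw' Hw.
Qed.

Lemma rank_K N (C : 'M['F_2]_N) :
  \rank (Kmx C) = (N - (\rank C + (if (ones N <= C)%MS then 0 else 1)))%N.
Proof. by rewrite /Kmx mxrank_ker mxrank_tr rank_cK. Qed.

Lemma rank_cK_le N (C : 'M['F_2]_N) :
  (\rank C + (if (ones N <= C)%MS then 0 else 1) <= N)%N.
Proof. by rewrite -rank_cK rank_leq_col. Qed.

Definition b2f (b : bool) : 'F_2 := (b : nat)%:R.
Lemma b2f_xor a b : b2f (a (+) b) = b2f a + b2f b.
Proof. by case: a; case: b; rewrite /b2f /= ?addr0 ?add0r ?F2_11. Qed.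
Lemma b2f_inj a b : b2f a = b2f b -> a = b.
Proof. by case: a; case: b => //= /eqP; rewrite /b2f /= ?oner_eq0 // eq_sym oner_eq0. Qed.
Lemma b2f_eq1 (z : 'F_2) : b2f (z == 1) = z.
Proof. by case: (F2_cases z) => ->; rewrite /b2f /= ?eqxx // eq_sym oner_eq0. Qed.
Lemma b2f_odd n : (n%:R : 'F_2) = b2f (odd n).
Proof. exact: F2_nat. Qed.
Lemma sumxD N (x y : 'rV['F_2]_N) : sumx (x + y) = sumx x + sumx y.
Proof. by rewrite /sumx -big_split; apply: eq_bigr => i _; rewrite mxE. Qed.
Lemma sumx_unitv N (i : 'I_N) : sumx (unitv i) = 1.
Proof.
rewrite /sumx (bigD1 i) //= unitvE eqxx big1 ?addr0 // => l /negbTE Hl.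
by rewrite unitvE Hl.
Qed.
Lemma unitvK N (x : 'rV['F_2]_N) i : x + unitv i + unitv i = x.
Proof. by rewrite -addrA; apply/rowP => l; rewrite !mxE F2_xx addr0. Qed.
Lemma F2_01 : (0 == 1 :> 'F_2) = false. Proof. by rewrite eq_sym oner_eq0. Qed.
Lemma F2_solve (a b c : 'F_2) : a + b = c -> a = c + b.
Proof. by move=> <-; rewrite -addrA F2_xx addr0. Qed.
Lemma F2_solve3 (a b c d : 'F_2) : a + b + c = d -> a = d + b + c.
Proof. move: a b c d; f2bf. Qed.

Close Scope ring_scope.
Unset Implicit Arguments.
Set Strict Implicit.

Theorem mainTheorem8 (N k : nat) (V : finType) (adj : rel V) (col : V -> V -> 'I_N)
    (par : V -> V -> bool) (bos : pred V) (C : 'M['F_2]_N) :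
  adinkra adj col par bos ->
  #|V| = (2 ^ (N - k))%N ->
  doubly_even_code k C ->
  associated_code adj col C ->
  let a := (if (ones N <= C)%MS then 0 else 1)%N in
  let Aut := adinkra_aut adj col par bos in
  [/\ #|Aut| = (2 ^ (N - 2 * k - a))%N,
      #|[set orbit 'P Aut v | v : V]| = (2 ^ (k + a))%N &
      (forall u v : V, #|orbit 'P Aut u| = #|orbit 'P Aut v|)].
Proof.
case=> [[irr sym] Hcp Hconn [Hbos Huniq] Hsq] HV HC [lab [Hsurj Hlab Hedge]] a Aut.
Local Open Scope ring_scope.
pose e := @unitv N.
have labE x y : lab x = lab y <-> (x - y <= C)%MS by apply: Hlab.
have labT x y c : lab x = lab y -> lab (x + c) = lab (y + c).
  by move/labE => H; apply/labE; rewrite opprD addrACA subrr addr0.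
have labC x w : (w <= C)%MS -> lab (x + w) = lab x.
  by move=> Hw; apply/labE; rewrite addrC addKr.
pose pre v := odflt 0 [pick x | lab x == v].
have lab_pre v : lab (pre v) = v.
  rewrite /pre; case: pickP => [x /eqP //|H].
  by case: (Hsurj v) => x Hx; move: (H x); rewrite Hx eqxx.
have pre_lab x : exists2 w, (w <= C)%MS & pre (lab x) = x + w.
  exists (pre (lab x) - x); last by rewrite addrC subrK.
  by apply/labE; rewrite lab_pre.
have nbr x v : adj (lab x) v -> v = lab (x + e (col (lab x) v)).
  move=> Hv; case: (Huniq (lab x) (col (lab x) v)) => w [_ Hw].
  by rewrite -(Hw _ (Hedge x (col (lab x) v))) (Hw v (conj Hv erefl)).
have adjE x y : adj (lab x) (lab y) <-> exists i, lab y = lab (x + e i).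
  split=> [/nbr H|[i ->]]; first by exists (col (lab x) (lab y)).
  exact: (Hedge x i).1.
pose T c v := lab (pre v + c).
have TE c x : T c (lab x) = lab (x + c) by apply: labT; rewrite lab_pre.
have T_inj c : injective (T c).
  move=> u v /labE; rewrite opprD addrACA subrr addr0 => /labE.
  by rewrite !lab_pre.
pose Tp c := perm (T_inj c).
have TpE c x : Tp c (lab x) = lab (x + c) by rewrite permE TE.
have Tp_eq c d : Tp c = Tp d <-> (c - d <= C)%MS.
  split=> [H | H].
    by apply/labE; move: (TpE c 0) (TpE d 0); rewrite H !add0r => -> ->.
  apply/permP => v; rewrite -(lab_pre v) !TpE; apply/labE.
  by rewrite opprD addrACA subrr add0r.
have TpM c (d : 'rV['F_2]_N) : (Tp c * Tp d)%g = Tp (c + d).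
  by apply/permP => v; rewrite permM -(lab_pre v) !TpE addrA.
have Tp0 : Tp 0 = 1%g.
  by apply/permP => v; rewrite perm1 -{1}(lab_pre v) TpE addr0 lab_pre.
have bosL x : bos (lab x) = bos (lab 0) (+) (sumx x == 1).
  elim/cube_ind: x => [|x i IH]; first by rewrite /sumx big1 => [|l _]; rewrite ?mxE // F2_01 addbF.
  have := (Hbos _ _ (Hedge x i).1); rewrite IH sumxD sumx_unitv.
  case: (F2_cases (sumx x)) => ->; rewrite ?add0r ?F2_11 ?eqxx ?F2_01;
    by case: (bos (lab (x + unitv i))); case: (bos (lab 0)).
pose pt x i := b2f (par (lab x) (lab (x + e i))).
have ptC x w i : (w <= C)%MS -> pt (x + w) i = pt x i.
  by move=> Hw; rewrite /pt labC // addrAC labC.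
have ptB x i : pt (x + e i) i = pt x i.
  rewrite /pt unitvK; congr b2f; apply/esym; exact: (Hcp _ _ (Hedge x i).1).2.
have ptS x i j : i != j -> pt x i + pt (x + e i) j + pt (x + e j) i + pt x j = 1.
  move=> Hij.
  have [h1 c1] := Hedge x i; have [h2 c2] := Hedge (x + e i) j.
  have [h3 c3] := Hedge (x + e j) i; have [h4 c4] := Hedge x j.
  have E3 : lab (x + e j + e i) = lab (x + e i + e j) by rewrite addrAC.
  rewrite E3 in h3 c3.
  have Hc : col (lab x) (lab (x + e i)) != col (lab (x + e i)) (lab (x + e i + e j)).
    by rewrite c1 c2.
  have H3 : adj (lab (x + e i + e j)) (lab (x + e j)) by rewrite sym.
  have H4 : adj (lab (x + e j)) (lab x) by rewrite sym.
  have H5 : col (lab (x + e i + e j)) (lab (x + e j)) = col (lab x) (lab (x + e i)).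
    by rewrite -(Hcp _ _ h3).1 c3 c1.
  have H6 : col (lab (x + e j)) (lab x) = col (lab (x + e i)) (lab (x + e i + e j)).
    by rewrite -(Hcp _ _ h4).1 c4 c2.
  have Hodd := (Hsq _ _ _ h1 h2 Hc).2 _ H3 H4 H5 H6.
  rewrite -(Hcp _ _ h3).2 -(Hcp _ _ h4).2 in Hodd.
  rewrite /pt E3.
  by rewrite /b2f -!natrD F2_nat Hodd.
pose rho x i := pt x i + pi0 x i.
have [phi Hphi] : exists phi : 'rV['F_2]_N -> 'F_2, forall x i, phi (x + e i) = phi x + rho x i.
  apply: cube_exact => [x i|x i j Hij]; first by rewrite /rho ptB pi0_B.
  rewrite /rho; move: (ptS x i j Hij) (pi0_C x Hij).
  move: (pt x i) (pt (x + unitv i) j) (pt (x + unitv j) i) (pt x j).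
  move: (pi0 x i) (pi0 (x + unitv i) j) (pi0 (x + unitv j) i) (pi0 x j); f2bf.
pose Phc c x := phi (x + c) + phi x + Bf x c.
have dPhi c x j : Phc c (x + e j) = Phc c x + pt (x + c) j + pt x j.
  rewrite /Phc (addrAC x (e j) c) !Hphi BfDl Bf_unitv /rho pi0D.
  move: (phi (x + c)) (pt (x + c) j) (pi0 x j) (pi0 c j) (phi x) (pt x j) (Bf x c); f2bf.
have Ew w x : (w <= C)%MS -> phi (x + w) + phi x + Bf x w = phi (0 + w) + phi 0 + Bf 0 w.
  move=> Hw; apply: (cube_const (F := fun x => phi (x + w) + phi x + Bf x w)) => {}x i.
  rewrite (addrAC x (e i) w) !Hphi BfDl Bf_unitv /rho pi0D ptC //.
  move: (phi (x + w)) (pt x i) (pi0 x i) (pi0 w i) (phi x) (Bf x w); f2bf.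
have PhiInv c w x : (w <= C)%MS -> Phc c (x + w) + Phc c x = dotv w c.
  move=> Hw; have E1 := Ew w (x + c) Hw; have E2 := Ew w x Hw.
  have E3 := Bf_sym w c; rewrite (de_even HC Hw) mul0r add0r in E3.
  rewrite /Phc (addrAC x w c) !BfDl in E1 *.
  move/F2_solve3: E1 => ->; move/F2_solve3: E2 => ->; rewrite -E3.
  move: (phi (x + c)) (phi x) (Bf x c) (Bf w c) (Bf x w) (Bf c w) (phi (0 + w) + phi 0 + Bf 0 w); f2bf.
have trE (x y c : 'rV['F_2]_N) : (y + c) - (x + c) = y - x.
  by rewrite opprD addrACA subrr addr0.
have autTp c : (c <= Kmx C)%MS -> is_adinkra_aut adj col par bos (Tp c).
  rewrite memK => /andP[/eqP Horth /eqP Hsum].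
  have PhiI x w : (w <= C)%MS -> Phc c (x + w) = Phc c x.
    move=> Hw; move: (PhiInv c w x Hw); rewrite (proj1 (orthP _ _) Horth w Hw).
    by move/F2_solve; rewrite add0r.
  apply/and4P; split.
  - apply/forallP => u; apply/forallP => v.
    rewrite -(lab_pre u) -(lab_pre v) !TpE; apply/eqP.
    apply/idP/idP => /adjE [i Hi]; apply/adjE; exists i.
      by move/labE: Hi; rewrite (addrAC (pre u) c) trE => /labE.
    by rewrite (labT _ _ c Hi) addrAC.
  - by apply/forallP => u; rewrite -(lab_pre u) TpE bosL (bosL (pre u)) sumxD Hsum addr0.
  - apply/forallP => u; apply/forallP => v; apply/implyP.
    rewrite -(lab_pre u); set x := pre u => Huv.
    have Ev := nbr _ _ Huv; set i := col (lab x) v in Ev *.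
    by rewrite Ev !TpE (addrAC _ (e i) c) (Hedge _ i).2.
  - apply/existsP; exists [set v | Phc c (pre v) == 1].
    apply/forallP => u; apply/forallP => v; apply/implyP.
    rewrite -(lab_pre u); set x := pre u => Huv.
    have Ev := nbr _ _ Huv; set i := col (lab x) v in Ev *.
    rewrite Ev !TpE (addrAC _ (e i) c) !inE (_ : pre (lab x) = x); last by rewrite /x lab_pre.
    have [w Hw ->] := pre_lab (x + e i).
    rewrite PhiI //; apply/eqP; apply: b2f_inj; rewrite !b2f_xor !b2f_eq1.
    rewrite -/(pt (x + c) i) -/(pt x i) dPhi.
    move: (pt (x + c) i) (pt x i) (Phc c x); f2bf.
have autP s : is_adinkra_aut adj col par bos s -> exists2 c, (c <= Kmx C)%MS & s = Tp c.
  case/and4P => /forallP Hadj /forallP Hb /forallP Hcol /existsP [S /forallP HS].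
  pose c := pre (s (lab 0)).
  have Hs x : s (lab x) = lab (x + c).
    elim/cube_ind: x => [|x i IH]; first by rewrite add0r lab_pre.
    have [h1 c1] := Hedge x i.
    have h2 : adj (s (lab x)) (s (lab (x + e i))) by rewrite (eqP (forallP (Hadj _) _)).
    have c2 : col (s (lab x)) (s (lab (x + e i))) = i.
      by rewrite (eqP (implyP (forallP (Hcol _) _) h1)).
    rewrite IH in h2 c2; rewrite (nbr _ _ h2) c2.
    by rewrite addrAC.
  have Hseq : s = Tp c by apply/permP => v; rewrite -(lab_pre v) Hs TpE.
  exists c => //; rewrite memK; apply/andP; split; last first.
    move: (eqP (Hb (lab 0))); rewrite Hs add0r bosL.
    case: (F2_cases (sumx c)) => ->; rewrite ?eqxx ?oner_eq0 //.
    by case: (bos (lab 0)).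
  apply/eqP/orthP => w Hw.
  pose chi x := b2f (lab x \in S).
  have Hpt x i : pt (x + c) i = pt x i + chi x + chi (x + e i).
    have := implyP (forallP (HS (lab x)) (lab (x + e i))) (Hedge x i).1.
    rewrite !Hs (addrAC x (e i) c) => /eqP /(congr1 b2f).
    by rewrite !b2f_xor.
  have HG : forall x, Phc c x + chi x = Phc c 0 + chi 0.
    apply: (cube_const (F := fun x => Phc c x + chi x)) => x i.
    rewrite dPhi Hpt.
    move: (Phc c x) (pt x i) (chi x) (chi (x + e i)); f2bf.
  rewrite -(PhiInv c w 0 Hw) (F2_solve (HG (0 + w))) /chi labC //.
  move: (Phc c 0) (b2f (lab 0 \in S)); f2bf.
have AutE s : s \in Aut <-> exists2 c, (c <= Kmx C)%MS & s = Tp c.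
  rewrite /Aut /adinkra_aut inE; split => [/autP //| [c Hc ->]]; exact: autTp.
have gAut : group_set Aut.
  apply/group_setP; split.
    by apply/AutE; exists 0; rewrite ?sub0mx ?Tp0.
  move=> s t /AutE[c Hc ->] /AutE[d Hd ->]; apply/AutE.
  by exists (c + d); rewrite ?addmx_sub ?TpM.
pose G := Group gAut.
have HCK := C_sub_K HC.
pose D := (Kmx C :\: C)%MS.
pose r := \rank D.
pose f (u : 'rV['F_2]_r) := Tp (u *m row_base D).
have AutD : Aut = [set f u | u : 'rV['F_2]_r].
  apply/setP => s; apply/idP/imsetP.
    case/AutE => c Hc ->.
    have : (c <= D + Kmx C :&: C)%MS by rewrite addsmx_diff_cap_eq.
    case/sub_addsmxP => -[u1 u2] /= Ec.
    have : (u1 *m D <= row_base D)%MS by rewrite eq_row_base submxMl.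
    case/submxP => v Ev; exists v => //; apply/Tp_eq.
    rewrite Ec -Ev addrC addKr.
    exact: submx_trans (submxMl _ _) (capmxSr _ _).
  case=> u _ ->; apply/AutE; exists (u *m row_base D) => //.
  apply: submx_trans (submxMl _ _) _; rewrite eq_row_base; exact: diffmxSl.
have f_inj : injective f.
  move=> u u' /Tp_eq H; apply: (row_free_inj (row_base_free D)); apply/eqP.
  rewrite -subr_eq0 -submx0 -(capmx_diff (Kmx C) C) sub_capmx H andbT.
  rewrite -mulmxBl; apply: submx_trans (submxMl _ _) _.
  by rewrite eq_row_base.
have cardAut : #|Aut| = (2 ^ r)%N.
  by rewrite AutD card_imset // card_mx card_Fp // mul1n.
have rankD : (r + k)%N = \rank (Kmx C).
  by rewrite -(mxrank_cap_compl (Kmx C) C) (capmx_idPr HCK) HC.1 addnC.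
have cardOrb v : #|orbit 'P Aut v| = #|Aut|.
  apply: card_in_imset => s t /AutE[c _ ->] /AutE[d _ ->] /=.
  rewrite !apermE -(lab_pre v) !TpE => /labE H; apply/Tp_eq.
  by rewrite (addrC (pre v) c) (addrC (pre v) d) trE in H.
have acts : [acts G, on [set: V] | 'P].
  apply/subsetP => s _; rewrite !inE /=; apply/subsetP => x _; rewrite !inE //.
have Hpart := orbit_partition acts.
have Horb : [set orbit 'P Aut v | v : V] = orbit 'P G @: [set: V].
  by apply/setP => X; apply/imsetP/imsetP => -[v _ ->]; exists v.
have := card_uniform_partition (n := #|Aut|) _ Hpart.
rewrite -Horb cardsT HV => /(_ _) Hc.
have {}Hc : (2 ^ (N - k))%N = (#|[set orbit 'P Aut v | v : V]| * #|Aut|)%N.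
  by apply: Hc => X /imsetP[v _ ->]; exact: cardOrb.
have Hle := rank_cK_le C; have HK := rank_K C.
rewrite HC.1 -/a in Hle HK.
split.
- by rewrite cardAut; congr (2 ^ _)%N; lia.
- rewrite cardAut in Hc.
  have E : (2 ^ (N - k))%N = (2 ^ (k + a) * 2 ^ r)%N by rewrite -expnD; congr (2 ^ _)%N; lia.
  by move: Hc; rewrite E => /eqP; rewrite eqn_pmul2r ?expn_gt0 // => /eqP.
- by move=> u v; rewrite !cardOrb.
Qed.
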